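(* Let $k\ge4$ and let $C_k=\{x_{j_1}x_{j_2}\cdots x_{j_{k-3}}x_j^2:\ 1\le j_1<j_2<\dots<j_{k-3}<k,\ j_1\le j<k\}\subset P_{k-1}$. Then $C_k$ is exactly the set of admissible monomials $z$ in $P_{k-1}$ with weight vector $\omega(z)=(k-3,1,0,0,\dots)$. Consequently $\dim QP_{k-1}((k-3,1,0,\dots))=(k-3)\binom k2$.
   Context: $P_{k-1}=\mathbb F_2[x_1,\dots,x_{k-1}]$, $\deg x_i=1$, a module over the mod-2 Steenrod algebra $\mathcal A$, with augmentation ideal $\mathcal A^+$. For $a=\sum_i\alpha_i(a)2^i$ ($\alpha_i(a)\in\{0,1\}$) and a monomial $x=x_1^{a_1}\cdots x_{m}^{a_{m}}$, $\nu_j(x)=a_j$, the weight vector is $\omega(x)=(\omega_1(x),\omega_2(x),\dots)$ with $\omega_i(x)=\sum_j\alpha_{i-1}(\nu_j(x))$, and $\sigma(x)=(\nu_1(x),\dots,\nu_m(x))$. Weight vectors and sigma vectors are ordered left-lexicographically. For monomials $x,y$ of the same degree, $x<y$ iff $\omega(x)<\omega(y)$, or $\omega(x)=\omega(y)$ and $\sigma(x)<\sigma(y)$. A monomial $x$ is inadmissible if there are monomials $y_1,\dots,y_m$ with $y_t<x$ for all $t$ and $x-\sum_t y_t\in\mathcal A^+P_{k-1}$; otherwise it is admissible. For a weight vector $\omega$ (eventually-zero sequence, $\deg\omega=\sum_i2^{i-1}\omega_i$), $P(\omega)$ is spanned by monomials $y$ with $\deg y=\deg\omega$ and $\omega(y)\le\omega$,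 $P^-(\omega)$ by those with $\omega(y)<\omega$, and $QP_{k-1}(\omega)=P_{k-1}(\omega)/\big((\mathcal A^+P_{k-1}\cap P_{k-1}(\omega))+P_{k-1}^-(\omega)\big)$. *)

(* Defs.v *)
From HB Require Import structures.
From mathcomp Require Import all_boot all_order all_algebra.
Set Implicit Arguments. Unset Strict Implicit. Unset Printing Implicit Defensive.

(* Variable x_{j+1} of the paper is indexed by j : 'I_n.                   *)
Definition mon (n : nat) := {ffun 'I_n -> nat}.

Definition mdeg n (x : mon n) : nat := \sum_(j < n) x j.

(* Polynomials over F_2 : finite lists of monomials, the coefficient of a  *)
(* monomial being the parity of its multiplicity (so ++ is addition).      *)
Definition coef n (p : seq (mon n)) (y : mon n) : bool := odd (count_mem y p).

(* Sq^i on a monomial (Cartan formula):                                    *)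
(* Sq^i(x_1^{a_1}...x_n^{a_n}) = sum_{t_1+...+t_n=i} prod_j C(a_j,t_j)     *)
(*                                  x_1^{a_1+t_1} ... x_n^{a_n+t_n}.       *)
Definition Sq n (i : nat) (x : mon n) : seq (mon n) :=
  map (fun t : {ffun 'I_n -> 'I_i.+1} => ([ffun j => x j + t j] : mon n))
    (filter (fun t : {ffun 'I_n -> 'I_i.+1} =>
       (\sum_(j < n) (t j : nat) == i) && odd (\prod_(j < n) 'C(x j, t j)))
       (enum {: {ffun 'I_n -> 'I_i.+1}})).

(* p lies in A^+ P_n : p is a (finite, F_2-)sum of elements Sq^i(g),       *)
(* i > 0, g a monomial.  (A^+ P_n = sum_{i>0} Im Sq^i.)                     *)
Definition hit n (p : seq (mon n)) : Prop :=
  exists gs : seq (nat * mon n),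
    (forall ig, ig \in gs -> 0 < ig.1) /\
    forall y, coef p y = coef (flatten [seq Sq ig.1 ig.2 | ig <- gs]) y.

(* Weight vector, 0-indexed: omega x i = omega_{i+1}(x) of the paper       *)
Definition omega n (x : mon n) (i : nat) : nat := \sum_(j < n) odd (x j %/ 2 ^ i).

Definition lexlt (f g : nat -> nat) : Prop :=
  exists i, (forall j, j < i -> f j = g j) /\ f i < g i.

Definition sigmalt n (x y : mon n) : Prop :=
  exists i : 'I_n, (forall j : 'I_n, (j < i)%N -> x j = y j) /\ x i < y i.

Definition monlt n (y x : mon n) : Prop :=
  mdeg y = mdeg x /\
  (lexlt (omega y) (omega x) \/ (omega y =1 omega x /\ sigmalt y x)).

Definition inadmissible n (x : mon n) : Prop :=
  exists ys : seq (mon n), (forall y, y \in ys -> monlt y x) /\ hit (x :: ys).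

Definition admissible n (x : mon n) : Prop := ~ inadmissible x.

(* Weight vectors as finite lists (omega_{i+1} = nth 0 w i, rest zero).    *)
Definition wfun (w : seq nat) (i : nat) : nat := nth 0 w i.
Definition wdeg (w : seq nat) : nat := \sum_(i < size w) 2 ^ i * nth 0 w i.

(* Boolean lexicographic comparison on the first L coordinates.  Used with *)
(* L = wdeg w + size w, beyond which all vectors considered below vanish    *)
(* (a monomial of degree d has omega_i = 0 for i >= d), so this is exactly  *)
(* the lexicographic order on weight vectors.                              *)
Definition lexltb (L : nat) (f g : nat -> nat) : bool :=
  has (fun i => all (fun j => f j == g j) (iota 0 i) && (f i < g i)) (iota 0 L).
Definition lexeqb (L : nat) (f g : nat -> nat) : bool :=
  all (fun j => f j == g j) (iota 0 L).

Section QP.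
Variables (n : nat) (w : seq nat).
Local Notation d := (wdeg w).
Local Notation L := (wdeg w + size w).
Local Notation T := {ffun 'I_n -> 'I_d.+1}.
Local Notation N := #|{: T}|.
Local Notation K := #|{: 'I_d.+1 * T}|.

Definition expo (t : T) : mon n := [ffun j => nat_of_ord (t j)].

Definition rowOf (p : seq (mon n)) : 'rV['F_2]_N :=
  \row_(c < N) ((coef p (expo (enum_val c)) : nat)%:R)%R.

Definition Pw_mx : 'M['F_2]_N :=
  \matrix_(c < N) (let y := expo (enum_val c) in
    if (mdeg y == d) && (lexltb L (omega y) (wfun w) || lexeqb L (omega y) (wfun w))
    then rowOf [:: y] else 0%R).

Definition Pwm_mx : 'M['F_2]_N :=
  \matrix_(c < N) (let y := expo (enum_val c) in
    if (mdeg y == d) && lexltb L (omega y) (wfun w)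
    then rowOf [:: y] else 0%R).

Definition hit_mx : 'M['F_2]_(K, N) :=
  \matrix_(c < K) (let ig := enum_val c in
    if (0 < (ig.1 : nat)) && (mdeg (expo ig.2) + ig.1 == d)
    then rowOf (Sq ig.1 (expo ig.2)) else 0%R).

Definition QPdim : nat :=
  \rank Pw_mx - \rank ((hit_mx :&: Pw_mx) + Pwm_mx)%MS.
End QP.

(* the set C_k (here n = k-1 variables, 0-indexed):                         *)
Definition inC (k : nat) (z : mon (k - 1)) : Prop :=
  exists (S : {set 'I_(k - 1)}) (j : 'I_(k - 1)),
    [/\ #|S| = k - 3, [exists s in S, (s <= j)%N] &
        z = [ffun i => ((i \in S) : nat) + 2 * ((i == j) : nat)]].

(* Main.v *)
Require Import Defs.
From HB Require Import structures.
From mathcomp Require Import all_boot all_order all_algebra.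
From mathcomp Require Import zify.

Module Part1.
Set Implicit Arguments. Unset Strict Implicit. Unset Printing Implicit Defensive.

Lemma coef_uniq n (p : seq (mon n)) y : uniq p -> coef p y = (y \in p).
Proof. by move=> u; rewrite /coef count_uniq_mem //; case: (y \in p). Qed.

Lemma Sq_uniq n i (g : mon n) : uniq (Sq i g).
Proof.
rewrite /Sq map_inj_uniq; first by apply: filter_uniq; apply: enum_uniq.
move=> t t' /ffunP E.
apply/ffunP => v; apply: ord_inj; have := E v; rewrite !ffunE => /eqP; by rewrite eqn_add2l => /eqP.
Qed.

Lemma mem_Sq n i (g y : mon n) :
  y \in Sq i g <-> exists t : {ffun 'I_n -> 'I_i.+1},
    [/\ \sum_(j < n) (t j : nat) = i, odd (\prod_(j < n) 'C(g j, t j)) &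
        y = [ffun j => g j + t j]].
Proof.
split.
  case/mapP => t; rewrite mem_filter mem_enum andbT => /andP [/eqP h1 h2] ->.
  by exists t.
case=> t [h1 h2 ->]; apply: map_f; by rewrite mem_filter mem_enum h1 h2 eqxx.
Qed.

Lemma odd_prod_all n (F : 'I_n -> nat) v : odd (\prod_(j < n) F j) -> odd (F v).
Proof. by rewrite (bigD1 v) //= oddM => /andP []. Qed.

Lemma small_bin a b : a + b <= 3 -> odd 'C(a, b) -> 0 < b -> a = 1 /\ b = 1.
Proof.
by case: a => [|[|[|[|a]]]]; case: b => [|[|[|[|b]]]].
Qed.

Lemma Sq_entries n i (g y : mon n) (t : {ffun 'I_n -> 'I_i.+1}) :
  (forall v, y v <= 3) -> odd (\prod_(j < n) 'C(g j, t j)) ->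
  y = [ffun j => g j + t j] ->
  forall v, 0 < t v -> [/\ y v = 2, g v = 1 & (t v : nat) = 1].
Proof.
move=> hy ho hE v tv.
have := hy v; rewrite hE ffunE => hle.
have [e1 e2] := small_bin hle (odd_prod_all v ho) tv; by rewrite e1 e2.
Qed.

Lemma sum_t0 n i (t : {ffun 'I_n -> 'I_i.+1}) :
  (forall v, (t v : nat) = 0) -> \sum_(j < n) (t j : nat) = 0.
Proof. by move=> h; rewrite big1. Qed.

Lemma Sq_no n i (g y : mon n) : (forall v, y v <= 3) -> (forall v, y v != 2) ->
  0 < i -> y \notin Sq i g.
Proof.
move=> h3 h2 hi; apply/negP => /mem_Sq [t [hs ho hy]].
have ht : forall v, (t v : nat) = 0.
  move=> v; case: (posnP (t v)) => // tv.
  by have [e _ _] := Sq_entries h3 ho hy tv; move: (h2 v); rewrite e.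
by move: hs; rewrite sum_t0 // => e; rewrite -e in hi.
Qed.

Lemma Sq_one n i (h y : mon n) (a : 'I_n) : (forall v, y v <= 3) -> y a = 2 ->
  (forall v, v != a -> y v != 2) -> 0 < i ->
  y \in Sq i h <-> (i = 1 /\ h = [ffun v => y v - (v == a)]).
Proof.
move=> h3 ha h2 hi; split.
  case/mem_Sq => t [hs ho hy].
  have ht : forall v, v != a -> (t v : nat) = 0.
    move=> v va; case: (posnP (t v)) => // tv.
    by have [e _ _] := Sq_entries h3 ho hy tv; move: (h2 v va); rewrite e.
  have hsa : \sum_(j < n) (t j : nat) = t a.
    by rewrite (bigD1 a) //= big1 ?addn0 // => v /ht.
  have ta : 0 < t a by rewrite -hsa hs.
  have [_ ga t1] := Sq_entries h3 ho hy ta.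
  split; first by rewrite -hs hsa t1.
  apply/ffunP => v; rewrite hy !ffunE.
  case: (eqVneq v a) => [->|va]; first by rewrite t1 ga.
  by rewrite ht //= addn0 subn0.
move=> [ei eh]; subst i.
apply/mem_Sq; exists [ffun v => if v == a then ord_max else ord0]; split.
- rewrite (bigD1 a) //= big1 ?ffunE ?eqxx // => v va; by rewrite ffunE (negbTE va).
- rewrite (bigD1 a) //= big1 ?ffunE ?eqxx ?muln1.
    by rewrite eh ffunE eqxx ha bin1.
  move=> v va; by rewrite ffunE (negbTE va) bin0.
- apply/ffunP => v; rewrite eh !ffunE.
  case: (eqVneq v a) => [->|va]; first by rewrite ha.
  by rewrite subn0 addn0.
Qed.

End Part1.
Import Part1.

Module Part2.
Set Implicit Arguments. Unset Strict Implicit. Unset Printing Implicit Defensive.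

Definition zf n (S : {set 'I_n}) (j : 'I_n) : mon n :=
  [ffun i => ((i \in S) : nat) + 2 * ((i == j) : nat)].

Lemma sum_bool_card n (P : pred 'I_n) : \sum_(v < n) (P v : nat) = #|[set v | P v]|.
Proof.
rewrite -sum1_card [RHS]big_mkcond /=; apply: eq_bigr => v _; rewrite inE; by case: (P v).
Qed.

Lemma sum_eq1 n (j : 'I_n) : \sum_(v < n) ((v == j) : nat) = 1.
Proof. by rewrite (bigD1 j) //= big1 ?eqxx // => v /negbTE ->. Qed.

Lemma zf_le3 n S (j : 'I_n) v : zf S j v <= 3.
Proof. rewrite ffunE; case: (v \in S); case: (v == j); by []. Qed.

Lemma mdeg_zf n S (j : 'I_n) : mdeg (zf S j) = #|S| + 2.
Proof.
rewrite /mdeg; under eq_bigr do rewrite ffunE.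
rewrite big_split /= sum_bool_card -big_distrr /= sum_eq1 muln1.
by congr (_ + _); apply: eq_card => v; rewrite inE.
Qed.

Lemma wfunE m i : wfun [:: m; 1] i = if i == 0 then m else if i == 1 then 1 else 0.
Proof. by rewrite /wfun; case: i => [|[|i]] //=; rewrite nth_nil. Qed.

Lemma omega_zf n S (j : 'I_n) : omega (zf S j) =1 wfun [:: #|S|; 1].
Proof.
move=> i; rewrite wfunE /omega.
case: i => [|[|i]] /=.
- under eq_bigr => v _ do (rewrite expn0 divn1 /zf ffunE; have -> : odd ((v \in S) + 2 * (v == j)) = (v \in S) by case: (v \in S); case: (v == j)).
  rewrite sum_bool_card; by apply: eq_card => v; rewrite inE.
- under eq_bigr => v _ do (rewrite expn1 /zf ffunE; have -> : odd (((v \in S) + 2 * (v == j)) %/ 2) = (v == j) by case: (v \in S); case: (v == j)).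
  exact: sum_eq1.
- rewrite big1 // => v _; rewrite divn_small //.
  apply: (leq_ltn_trans (zf_le3 S j v)).
  rewrite !expnS; have := expn_gt0 2 i; lia.
Qed.

Lemma sum_bool_eq1 n (P : pred 'I_n) : \sum_(v < n) (P v : nat) = 1 ->
  exists j, forall v, P v = (v == j).
Proof.
case: (pickP P) => [j Pj|P0]; last by rewrite big1 // => v _; rewrite P0.
rewrite (bigD1 j) //= Pj => /eqP; rewrite eqSS => /eqP /eqP.
rewrite sum_nat_eq0 => /forallP h; exists j => v.
case: (eqVneq v j) => [->//|vj]; have := h v; rewrite vj /=; by case: (P v).
Qed.

Lemma decomp4 x : x = odd x + 2 * odd (x %/ 2) + 4 * (x %/ 4).
Proof.
have h1 := divn_eq x 2; have h2 := divn_eq (x %/ 2) 2.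
rewrite -divnMA in h2; rewrite !modn2 in h1 h2; lia.
Qed.

Lemma zf_struct n (y : mon n) m : mdeg y = m + 2 -> omega y 0 = m -> omega y 1 = 1 ->
  exists (S : {set 'I_n}) (j : 'I_n), #|S| = m /\ y = zf S j.
Proof.
move=> hd h0 h1.
have {h0} h0 : \sum_(v < n) odd (y v) = m.
  by rewrite -h0 /omega; apply: eq_bigr => v _; rewrite expn0 divn1.
have {h1} h1 : \sum_(v < n) odd (y v %/ 2) = 1 by move: h1; rewrite /omega expn1.
have h4 : forall v, y v %/ 4 = 0.
  have e : \sum_(v < n) y v = \sum_(v < n) odd (y v) + 2 * \sum_(v < n) odd (y v %/ 2) + 4 * \sum_(v < n) (y v %/ 4).
    rewrite !big_distrr /= -!big_split /=.
    by apply: eq_bigr => v _; rewrite -decomp4.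
  rewrite h0 h1 in e.
  rewrite -/(mdeg y) hd in e.
  have /eqP : \sum_(v < n) (y v %/ 4) = 0 by lia.
  rewrite sum_nat_eq0 => /forallP h v; exact/eqP/h.
have [j hj] := sum_bool_eq1 h1.
exists [set v | odd (y v)], j; split; first by rewrite -sum_bool_card.
apply/ffunP => v; rewrite /zf ffunE inE -hj.
by rewrite {1}(decomp4 (y v)) h4 muln0 addn0.
Qed.

Lemma zf_inj n (S S' : {set 'I_n}) j j' : zf S j = zf S' j' -> S = S' /\ j = j'.
Proof.
move=> e.
have ev v : ((v \in S) : nat) + 2 * ((v == j) : nat) = ((v \in S') : nat) + 2 * ((v == j') : nat).
  by have := congr1 (fun f : mon n => f v) e; rewrite /zf !ffunE.
split.
  apply/setP => v; have := ev v.
  by case: (v \in S); case: (v \in S'); case: (v == j); case: (v == j').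
have := ev j; rewrite eqxx.
by case: (j \in S); case: (j \in S'); case: (eqVneq j j').
Qed.

End Part2.
Import Part2.

Module Part3.
Set Implicit Arguments. Unset Strict Implicit. Unset Printing Implicit Defensive.

Definition sqT n (T : {set 'I_n}) : mon n := [ffun u => ((u \in T) : nat)].
Definition Fv n (T : {set 'I_n}) (v : 'I_n) : mon n :=
  [ffun u => ((u \in T) : nat) + ((u == v) : nat)].

Lemma Fv_inj n (T : {set 'I_n}) : injective (Fv T).
Proof.
move=> v v' e; have := congr1 (fun f : mon n => f v) e; rewrite /Fv !ffunE eqxx.
by case: (v \in T); case: (eqVneq v v').
Qed.

Lemma Fv_zf n (T : {set 'I_n}) v : v \in T -> Fv T v = zf (T :\ v) v.
Proof.
move=> vT; apply/ffunP => u; rewrite /Fv /zf !ffunE in_setD1.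
by case: (eqVneq u v) => [->|]; rewrite ?vT.
Qed.

Lemma zf_Fv n (S : {set 'I_n}) j : j \notin S -> zf S j = Fv (j |: S) j.
Proof.
move=> jS; apply/ffunP => u; rewrite /Fv /zf !ffunE in_setU1.
by case: (eqVneq u j) => [->|]; rewrite ?(negbTE jS).
Qed.

Lemma Fv_le3 n (T : {set 'I_n}) v u : Fv T v u <= 3.
Proof. rewrite ffunE; by case: (u \in T); case: (u == v). Qed.

Lemma Sq_Fv n i (T : {set 'I_n}) v h : v \in T -> 0 < i ->
  Fv T v \in Sq i h <-> (i = 1 /\ h = sqT T).
Proof.
move=> vT hi.
have H := @Sq_one n i h (Fv T v) v (Fv_le3 T v).
have E : [ffun u => Fv T v u - (u == v)] = sqT T.
  by apply/ffunP => u; rewrite /Fv /sqT !ffunE addnK.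
rewrite E in H.
apply: H => //; first by rewrite ffunE vT eqxx.
move=> u uv; rewrite ffunE (negbTE uv) addn0; by case: (u \in T).
Qed.

Lemma SqT_mem n (T : {set 'I_n}) : Sq 1 (sqT T) =i [seq Fv T v | v <- enum T].
Proof.
move=> y; apply/idP/idP.
  case/mem_Sq => t [hs ho hy].
  have [a ta] : exists a, (t a : nat) != 0.
    apply/existsP; apply: contraT; rewrite negb_exists => /forallP h.
    by move: hs; rewrite big1 // => v _; have := h v; rewrite negbK => /eqP.
  have ta1 : (t a : nat) = 1 by move: ta (ltn_ord (t a)); case: (t a) => [[|[|x]]] //=.
  have hr : forall u, u != a -> (t u : nat) = 0.
    move: hs; rewrite (bigD1 a) //= => hs u ua.
    move/eqP: hs; rewrite ta1 add1n eqSS sum_nat_eq0 => /forallP /(_ u).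
    by rewrite ua => /eqP.
  have aT : a \in T.
    have := odd_prod_all a ho; rewrite ta1 /sqT ffunE; by case: (a \in T).
  apply/mapP; exists a; first by rewrite mem_enum.
  rewrite hy; apply/ffunP => u; rewrite /Fv /sqT !ffunE.
  case: (eqVneq u a) => [->|ua]; first by rewrite ta1.
  by rewrite hr.
case/mapP => v; rewrite mem_enum => vT ->; by apply/Sq_Fv.
Qed.

End Part3.
Import Part3.

Module Part4.
Set Implicit Arguments. Unset Strict Implicit. Unset Printing Implicit Defensive.

Lemma lexlt_eq (f g : nat -> nat) : f =1 g -> ~ lexlt f g.
Proof. by move=> e [i [_ h]]; rewrite e ltnn in h. Qed.

Lemma sigmalt_irr n (y : mon n) : ~ sigmalt y y.
Proof. by case=> i [_]; rewrite ltnn. Qed.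

Lemma monlt_irr n (y : mon n) : ~ monlt y y.
Proof. case=> _ [h|[_ h]]; [exact: (@lexlt_eq (omega y) (omega y)) | exact: sigmalt_irr h]. Qed.

Lemma omega_Fv n (T : {set 'I_n}) v : v \in T -> omega (Fv T v) =1 wfun [:: #|T|.-1; 1].
Proof.
move=> vT i; rewrite Fv_zf // omega_zf; congr wfun; congr (_ :: _).
by rewrite (cardsD1 v T) vT.
Qed.

Lemma mdeg_Fv n (T : {set 'I_n}) v : v \in T -> mdeg (Fv T v) = #|T|.-1 + 2.
Proof. move=> vT; rewrite Fv_zf // mdeg_zf; by rewrite (cardsD1 v T) vT. Qed.

Lemma coef_flat_eq n (gs : seq (nat * mon n)) y1 y2 :
  (forall ig, ig \in gs -> count_mem y1 (Sq ig.1 ig.2) = count_mem y2 (Sq ig.1 ig.2)) ->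
  coef (flatten [seq Sq ig.1 ig.2 | ig <- gs]) y1 =
  coef (flatten [seq Sq ig.1 ig.2 | ig <- gs]) y2.
Proof.
move=> h; rewrite /coef !count_flatten -!map_comp; congr (odd (sumn _)).
by apply/eq_in_map => ig /h.
Qed.

Lemma adm_C n (S : {set 'I_n}) (j : 'I_n) : [exists s in S, s <= j] -> admissible (zf S j).
Proof.
move=> hex [ys [hys [gs [hpos hco]]]].
have zys : zf S j \notin ys.
  by apply/negP => /hys; apply: monlt_irr.
have Lz : coef (zf S j :: ys) (zf S j) = true.
  by rewrite /coef /= eqxx (count_memPn zys).
case: (boolP (j \in S)) => jS.
  have := hco (zf S j); rewrite Lz /coef count_flatten.
  rewrite (_ : sumn _ = 0) //.
  elim: gs hpos {hco} => [//|ig gs IH] hpos /=.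
  rewrite IH; last by move=> x xg; apply: hpos; rewrite inE xg orbT.
  rewrite addn0; apply/count_memPn; apply: Sq_no; first exact: zf_le3.
    move=> v; rewrite ffunE; case: (eqVneq v j) => [->|]; first by rewrite jS.
    by case: (v \in S).
  by apply: hpos; rewrite inE eqxx.
case/existsP: hex => s1 /andP [s1S s1j].
case: (@arg_minnP _ s1 (fun s => s \in S) (fun s => nat_of_ord s) s1S) => t0 t0S hmin.
have t0j : t0 < j.
  rewrite ltn_neqAle (leq_trans (hmin _ s1S) s1j) andbT.
  by apply/negP => /eqP /val_inj e; rewrite -e t0S in jS.
set T := j |: S.
have jT : j \in T by rewrite in_setU1 eqxx.
have t0T : t0 \in T by rewrite in_setU1 t0S orbT.
have ez : zf S j = Fv T j by rewrite zf_Fv.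
set m := Fv T t0.
have mz : m != zf S j.
  by rewrite ez; apply/negP => /eqP /Fv_inj e; rewrite e ltnn in t0j.
have mys : m \notin ys.
  apply/negP => /hys [_ []].
    apply: lexlt_eq => i; rewrite ez !omega_Fv //.
  case=> _ [i [hi hlt]].
  move: hlt; rewrite ez /m /Fv !ffunE.
  case: (eqVneq i j) => [eij|]; last by case: (i \in T); case: (i == t0).
  subst i => _; have := hi t0 t0j.
  have -> : m t0 = 2 by rewrite /m /Fv ffunE t0T eqxx.
  have -> : zf S j t0 = 1.
    rewrite /zf ffunE t0S; case: (eqVneq t0 j) => // e; by rewrite e ltnn in t0j.
  by [].
have Lm : coef (zf S j :: ys) m = false.
  by rewrite /coef /= (count_memPn mys) eq_sym (negbTE mz).
have := hco (zf S j); have := hco m; rewrite Lz Lm.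
rewrite (@coef_flat_eq _ gs m (zf S j)) => [<- //|ig igs].
rewrite !count_uniq_mem ?Sq_uniq //; congr nat_of_bool.
have hi := hpos ig igs.
apply/idP/idP => h.
  by rewrite ez; apply/(Sq_Fv _ jT hi); apply/(Sq_Fv _ t0T hi).
by apply/(Sq_Fv _ t0T hi); apply/(Sq_Fv _ jT hi); rewrite -ez.
Qed.

End Part4.
Import Part4.

Module Part5.
Set Implicit Arguments. Unset Strict Implicit. Unset Printing Implicit Defensive.

Lemma inadm n (S : {set 'I_n}) (j : 'I_n) : ~~ [exists s in S, s <= j] ->
  inadmissible (zf S j).
Proof.
move=> hn.
have hS : forall s, s \in S -> j < s.
  move=> s sS; rewrite ltnNge; apply/negP => sj; move/negP: hn; apply.
  by apply/existsP; exists s; rewrite sS.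
have jS : j \notin S by apply/negP => /hS; rewrite ltnn.
set T := j |: S.
have jT : j \in T by rewrite in_setU1 eqxx.
have ez : zf S j = Fv T j by rewrite zf_Fv.
exists [seq Fv T v | v <- enum S]; split.
  move=> y /mapP [v]; rewrite mem_enum => vS ->.
  have vT : v \in T by rewrite in_setU1 vS orbT.
  have jv := hS v vS.
  rewrite ez; split; first by rewrite !mdeg_Fv.
  right; split; first by move=> i; rewrite !omega_Fv.
  exists j; split.
    move=> u uj; rewrite /Fv !ffunE.
    have -> : (u == v) = false by apply/negP => /eqP e; subst u; lia.
    have -> : (u == j) = false by apply/negP => /eqP e; subst u; lia.
    by [].
  rewrite /Fv !ffunE eqxx.
  have -> : (j == v) = false by apply/negP => /eqP e; subst j; lia.
  by rewrite addn0 addn1.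
exists [:: (1, sqT T)]; split; first by move=> ig; rewrite inE => /eqP ->.
move=> y; rewrite /= cats0 ez.
have -> : Fv T j :: [seq Fv T v | v <- enum S] = [seq Fv T v | v <- j :: enum S] by [].
rewrite !coef_uniq ?Sq_uniq //; last first.
  rewrite map_inj_uniq; last exact: Fv_inj.
  by rewrite /= mem_enum jS enum_uniq.
rewrite SqT_mem; apply: eq_mem_map => u.
by rewrite inE !mem_enum in_setU1.
Qed.

Lemma omega_lt4 n (y : mon n) : (forall i, 2 <= i -> omega y i = 0) -> forall v, y v < 4.
Proof.
move=> h v; rewrite ltnNge; apply/negP => h4.
set i := trunc_log 2 (y v).
have lo : 2 ^ i <= y v by apply: trunc_logP; lia.
have hi : y v < 2 ^ i.+1 by apply: trunc_log_ltn.
have i2 : 2 <= i.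
  rewrite leqNgt; apply/negP => il; move: hi; rewrite expnS.
  have : 2 ^ i <= 2 ^ 1 by rewrite leq_exp2l //; lia.
  lia.
have q1 : y v %/ 2 ^ i = 1.
  apply/eqP; rewrite eqn_leq; apply/andP; split.
    by rewrite -ltnS ltn_divLR ?expn_gt0 // -expnS.
  by rewrite leq_divRL ?expn_gt0 // mul1n.
have := h i i2; rewrite /omega (bigD1 v) //= q1 /=; lia.
Qed.

Lemma zf_struct2 n (y : mon n) m : omega y 0 = m -> omega y 1 = 1 ->
  (forall i, 2 <= i -> omega y i = 0) ->
  exists (S : {set 'I_n}) (j : 'I_n), #|S| = m /\ y = zf S j.
Proof.
move=> h0 h1 h2; suff hd : mdeg y = m + 2 by exact: zf_struct hd h0 h1.
have h4 := omega_lt4 h2.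
have e : forall v, y v = odd (y v) + 2 * odd (y v %/ 2).
  by move=> v; rewrite {1}(decomp4 (y v)) (divn_small (h4 v)) muln0 addn0.
rewrite /mdeg (eq_bigr _ (fun v _ => e v)) big_split /= -big_distrr /=.
have {h0} h0 : \sum_(v < n) odd (y v) = m.
  by rewrite -h0 /omega; apply: eq_bigr => v _; rewrite expn0 divn1.
have {h1} h1 : \sum_(v < n) odd (y v %/ 2) = 1 by move: h1; rewrite /omega expn1.
by rewrite h0 h1.
Qed.

End Part5.
Import Part5.

Module Part6.
Set Implicit Arguments. Unset Strict Implicit. Unset Printing Implicit Defensive.

Lemma card_sum (T : finType) (P : pred T) : #|[set x | P x]| = \sum_(x : T) (P x : nat).
Proof.
rewrite -sum1_card [LHS]big_mkcond /=; apply: eq_bigr => v _; rewrite inE; by case: (P v).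
Qed.

Lemma card_gt n (j : 'I_n) : #|[set s : 'I_n | j < s]| = n - j.+1.
Proof.
rewrite card_sum -(big_mkord xpredT (fun s => ((j < s) : nat))).
have jn := ltn_ord j.
rewrite (big_cat_nat (n := j.+1)) //= big_nat_cond big1; last first.
  by move=> i /andP [/andP [_ h] _]; rewrite ltnNge -ltnS h.
rewrite add0n big_nat_cond (eq_bigr (fun _ => 1)); last first.
  by move=> i /andP [/andP [h _] _]; rewrite h.
by rewrite -big_nat_cond sum_nat_const_nat muln1.
Qed.

Lemma sum_bad m : \sum_(j < m.+2) 'C(m.+2 - j.+1, m) = m.+2.
Proof.
rewrite big_ord_recl big_ord_recl big1 /=.
  rewrite /bump /= addn0 subn1 /= subSS subn1 /= binn.
  by rewrite binSn addn1.
move=> i _; rewrite bin_small //=.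
rewrite /bump !leq0n /= !add1n; have := ltn_ord i; lia.
Qed.

Lemma count_pairs n : 2 <= n ->
  #|[set p : {set 'I_n} * 'I_n | (#|p.1| == n - 2) && [exists s in p.1, s <= p.2]]|
  = n * 'C(n, 2) - n.
Proof.
move=> n2.
rewrite card_sum -(pair_big (fun _ => true) (fun _ => true)
   (fun (S : {set 'I_n}) (j : 'I_n) => ((#|S| == n - 2) && [exists s in S, s <= j] : nat))) /=.
rewrite exchange_big /=.
have key : forall j : 'I_n,
  \sum_(S : {set 'I_n}) ((#|S| == n - 2) && [exists s in S, s <= j] : nat)
  + 'C(n - j.+1, n - 2) = 'C(n, 2).
  move=> j.
  have -> : 'C(n, 2) = #|[set A : {set 'I_n} | #|A| == n - 2]|.
    by rewrite card_draws card_ord bin_sub.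
  rewrite -card_gt -cards_draws.
  rewrite !card_sum -big_split /=; apply: eq_bigr => S _.
  case: (#|S| == n - 2); rewrite /= ?andbF //.
  case: (boolP [exists s in S, s <= j]) => [/existsP [s /andP [sS sj]]|hn] /=.
    suff -> : (S \subset [set s0 : 'I_n | j < s0]) = false by [].
    apply/negP => /subsetP /(_ s sS); rewrite inE ltnNge sj //.
  suff -> : (S \subset [set s0 : 'I_n | j < s0]) = true by [].
  apply/subsetP => s sS; rewrite inE ltnNge; apply/negP => sj.
  by move/negP: hn; apply; apply/existsP; exists s; rewrite sS.
have e : \sum_(j < n) \sum_(S : {set 'I_n}) ((#|S| == n - 2) && [exists s in S, s <= j] : nat)
  + \sum_(j < n) 'C(n - j.+1, n - 2) = \sum_(j < n) 'C(n, 2).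
  by rewrite -big_split; apply: eq_bigr => j _; apply: key.
rewrite sum_nat_const card_ord in e.
move: e; clear key; case: n n2 => [|[|m]] // _.
rewrite (_ : m.+2 - 2 = m); last by lia.
by rewrite sum_bad => <-; rewrite addnK.
Qed.

End Part6.
Import Part6.

Module Part7.
Set Implicit Arguments. Unset Strict Implicit. Unset Printing Implicit Defensive.
Import GRing.Theory.
Local Open Scope ring_scope.

Section Gen.
Variables (n : nat) (w : seq nat).
Local Notation d := (wdeg w).
Local Notation T := {ffun 'I_n -> 'I_d.+1}.
Local Notation N := #|{: T}|.

Definition code (y : mon n) : T := [ffun v => inord (y v)].
Definition idx (y : mon n) : 'I_N := enum_rank (code y).

Lemma expo_inj : injective (@expo n w).
Proof.
move=> t t' /ffunP e; apply/ffunP => v; apply: ord_inj; have := e v; by rewrite !ffunE.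
Qed.

Lemma expo_code (y : mon n) : (forall v, (y v <= d)%N) -> expo (code y) = y.
Proof. by move=> h; apply/ffunP => v; rewrite !ffunE inordK // ltnS. Qed.

Lemma expo_idx (y : mon n) : (forall v, (y v <= d)%N) -> expo (enum_val (idx y)) = y.
Proof. by move=> h; rewrite /idx enum_rankK expo_code. Qed.

Lemma idx_expo (c : 'I_N) : idx (expo (enum_val c)) = c.
Proof.
rewrite /idx (_ : code _ = enum_val c) ?enum_valK //.
by apply/ffunP => v; rewrite !ffunE inord_val.
Qed.

Lemma rowOfE (p : seq (mon n)) (c : 'I_N) :
  rowOf w p 0 c = (coef p (expo (enum_val c)) : nat)%:R.
Proof. by rewrite /rowOf mxE. Qed.

Lemma F2_double (b : bool) : ((b : nat)%:R + (b : nat)%:R : 'F_2) = 0.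
Proof. by case: b => //=; apply/eqP. Qed.

Lemma natr_addb (a b : bool) : (((a (+) b) : nat)%:R : 'F_2) = (a : nat)%:R + (b : nat)%:R.
Proof. by case: a; case: b => //=; rewrite ?add0r ?addr0 //; apply/esym/eqP. Qed.

Lemma rowOf_cat (p q : seq (mon n)) : rowOf w (p ++ q) = rowOf w p + rowOf w q.
Proof.
apply/rowP => c; rewrite [RHS]mxE !rowOfE /coef count_cat oddD; exact: natr_addb.
Qed.

Lemma rowOf_eq (p q : seq (mon n)) : coef p =1 coef q -> rowOf w p = rowOf w q.
Proof. by move=> e; apply/rowP => c; rewrite !rowOfE e. Qed.

Lemma rowOf1 (y : mon n) (c : 'I_N) :
  rowOf w [:: y] 0 c = ((y == expo (enum_val c)) : nat)%:R.
Proof. by rewrite rowOfE /coef /= addn0 eq_sym; case: (_ == _). Qed.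

Lemma rowOf_map (A : eqType) (f : A -> mon n) (s : seq A) :
  rowOf w (map f s) = \sum_(x <- s) rowOf w [:: f x].
Proof.
elim: s => [|x s IH]; first by rewrite big_nil; apply/rowP => c; rewrite rowOfE mxE.
by rewrite big_cons /= -IH -rowOf_cat.
Qed.

Definition vanish m (A : 'M['F_2]_(m, N)) (cs : seq 'I_N) :=
  forall r, \sum_(c <- cs) A r c = 0.

Lemma vanish_mul m m' (D : 'M['F_2]_(m', m)) (A : 'M_(m, N)) cs :
  vanish A cs -> vanish (D *m A) cs.
Proof.
move=> h r; under eq_bigr do rewrite mxE.
rewrite exchange_big /= big1 // => i _; rewrite -mulr_sumr h mulr0 //.
Qed.

Lemma vanish_sub m m' (A : 'M['F_2]_(m, N)) (B : 'M_(m', N)) cs :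
  (B <= A)%MS -> vanish A cs -> vanish B cs.
Proof. by case/submxP => D ->; apply: vanish_mul. Qed.

Lemma vanish_add m (A B : 'M['F_2]_(m, N)) cs :
  vanish A cs -> vanish B cs -> vanish (A + B) cs.
Proof.
move=> ha hb r; under eq_bigr do rewrite mxE.
by rewrite big_split /= ha hb addr0.
Qed.

Lemma vanish_adds m m' (A : 'M['F_2]_(m, N)) (B : 'M_(m', N)) cs :
  vanish A cs -> vanish B cs -> vanish (A + B)%MS cs.
Proof.
move=> ha hb; have : ((A + B)%MS <= (A + B)%MS)%MS by [].
case/sub_addsmxP => u ->; apply: vanish_add; exact: vanish_mul.
Qed.
End Gen.

End Part7.
Import Part7.

Module Part8.
Set Implicit Arguments. Unset Strict Implicit. Unset Printing Implicit Defensive.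
Import GRing.Theory.

Lemma min_elt n (S : {set 'I_n}) (j : 'I_n) : [exists s in S, s <= j] -> j \notin S ->
  exists t0, [/\ t0 \in S, t0 < j & forall s, s \in S -> t0 <= s].
Proof.
case/existsP => s1 /andP [s1S s1j] jS.
case: (@arg_minnP _ s1 (fun s => s \in S) (fun s => nat_of_ord s) s1S) => t0 t0S hmin.
exists t0; split => //.
rewrite ltn_neqAle (leq_trans (hmin _ s1S) s1j) andbT.
by apply/negP => /eqP /val_inj e; rewrite -e t0S in jS.
Qed.

Lemma Sq_mate n (S : {set 'I_n}) (j t0 : 'I_n) i g : t0 \in S -> j \notin S -> 0 < i ->
  (zf S j \in Sq i g) = (Fv (j |: S) t0 \in Sq i g).
Proof.
move=> t0S jS hi.
have jT : j \in j |: S by rewrite in_setU1 eqxx.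
have t0T : t0 \in j |: S by rewrite in_setU1 t0S orbT.
rewrite zf_Fv //; apply/idP/idP => h.
  by apply/(Sq_Fv _ t0T hi); apply/(Sq_Fv _ jT hi).
by apply/(Sq_Fv _ jT hi); apply/(Sq_Fv _ t0T hi).
Qed.

Lemma mate_notC n (S : {set 'I_n}) (j t0 : 'I_n) : t0 \in S -> t0 < j ->
  (forall s, s \in S -> t0 <= s) ->
  forall (S' : {set 'I_n}) (j' : 'I_n), [exists s in S', s <= j'] -> Fv (j |: S) t0 <> zf S' j'.
Proof.
move=> t0S t0j hmin S' j' /existsP [s /andP [sS' sj']] e.
have t0T : t0 \in j |: S by rewrite in_setU1 t0S orbT.
rewrite Fv_zf // in e; have [e1 e2] := zf_inj e; subst S' j'.
move: sS'; rewrite in_setD1 in_setU1 => /andP [st0 /orP [/eqP sj|sS]].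
  by subst s; move: sj'; rewrite leqNgt t0j.
have := hmin s sS; move: st0 sj' => /negP st0 h1 h2; apply: st0.
by apply/eqP/val_inj/eqP; rewrite eqn_leq h1 h2.
Qed.

Lemma part1 k (hk : 4 <= k) (z : mon (k - 1)) :
  inC z <-> (admissible z /\ omega z =1 wfun [:: k - 3; 1]).
Proof.
split.
  case=> S [j [hS hex ->]]; split; first exact: adm_C.
  by move=> i; rewrite omega_zf hS.
case=> hadm hom.
have h2 : forall i, 2 <= i -> omega z i = 0.
  by move=> i hi; rewrite hom wfunE; case: i hi => [|[|i]].
have := hom 0; have := hom 1; rewrite !wfunE /= => h1 h0.
have [S [j [hS ez]]] := zf_struct2 h0 h1 h2.
case: (boolP [exists s in S, s <= j]) => hex.
  by exists S, j; split.
by exfalso; apply: hadm; rewrite ez; apply: inadm.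
Qed.

End Part8.
Import Part8.

Module Part9.
Set Implicit Arguments. Unset Strict Implicit. Unset Printing Implicit Defensive.
Import GRing.Theory.

Lemma matrix_rowE (R : Type) m N (u : 'I_m -> 'rV[R]_N) r c :
  (\matrix_(i < m) u i)%R r c = u r ord0 c.
Proof. by have /rowP /(_ c) := rowK u r; rewrite mxE. Qed.

Section Spec.
Variable k : nat.
Hypothesis hk : 4 <= k.
Local Notation n := (k - 1).
Local Notation w := [:: k - 3; 1].
Local Notation d := (wdeg w).
Local Notation T := {ffun 'I_n -> 'I_d.+1}.
Local Notation N := #|{: T}|.
Local Notation L := (wdeg w + size w).

Lemma hd : d = k - 1.
Proof. by rewrite /wdeg /= big_ord_recr big_ord_recr big_ord0 /=; lia. Qed.

Definition isW (y : mon n) := mdeg y = k - 1 /\ omega y =1 wfun w.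

Lemma isW_bounded y : isW y -> forall v, y v <= d.
Proof.
case=> hy _ v; have : y v <= mdeg y by rewrite /mdeg (bigD1 v) //=; exact: leq_addr.
by rewrite hy hd.
Qed.

Lemma lexeqb_eq (f g : nat -> nat) M : f =1 g -> lexeqb M f g.
Proof. by move=> e; apply/allP => i _; rewrite e. Qed.

Lemma lexltb_eq (f g : nat -> nat) M : f =1 g -> lexltb M f g = false.
Proof. by move=> e; apply/hasP => [[i _ /andP [_]]]; rewrite e ltnn. Qed.

Lemma isW_zf (S : {set 'I_n}) j : #|S| = k - 3 -> isW (zf S j).
Proof. move=> hS; split; [rewrite mdeg_zf hS; lia | by move=> i; rewrite omega_zf hS]. Qed.

Lemma isW_Fv (S : {set 'I_n}) v : v \in S -> #|S| = k - 2 -> isW (Fv S v).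
Proof.
move=> vS hS; rewrite Fv_zf //; apply: isW_zf.
by move: hS; rewrite (cardsD1 v S) vS; lia.
Qed.

Lemma rowP_W y : isW y -> row (idx w y) (Pw_mx n w) = rowOf w [:: y].
Proof.
move=> hy; rewrite rowK /= expo_idx; last exact: isW_bounded.
case: hy => h1 h2; rewrite ifT //; apply/andP; split.
  by apply/eqP; rewrite h1 hd.
by rewrite lexeqb_eq // orbT.
Qed.

Lemma Pm_W y r : isW y -> Pwm_mx n w r (idx w y) = 0%R.
Proof.
move=> hy; rewrite matrix_rowE /=.
case: ifP => [/andP [_ hl]|_]; last by rewrite mxE.
rewrite rowOf1 expo_idx; last exact: isW_bounded.
case: eqP => // e; move: hl; rewrite e lexltb_eq //; by case: hy.
Qed.

Lemma vanish_H (cs : seq 'I_N) :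
  (forall i (g : mon n), 0 < i ->
     (\sum_(c <- cs) ((coef (Sq i g) (expo (enum_val c)) : nat)%:R : 'F_2) = 0)%R) ->
  vanish (hit_mx n w) cs.
Proof.
move=> h r; under eq_bigr do rewrite matrix_rowE /=.
case: ifP => [/andP [hi _]|_].
  under eq_bigr do rewrite rowOfE; exact: (h _ (expo (enum_val r).2) hi).
by rewrite big1 // => c _; rewrite mxE.
Qed.

Lemma vanish_Pm (cs : seq 'I_N) :
  (forall c, c \in cs -> isW (expo (enum_val c))) -> vanish (Pwm_mx n w) cs.
Proof.
move=> h r; rewrite big1_seq // => c /andP [_ /h hc].
by rewrite -(idx_expo c) Pm_W // idx_expo.
Qed.

Lemma vanish_X (cs : seq 'I_N) :
  (forall i (g : mon n), 0 < i ->
     (\sum_(c <- cs) ((coef (Sq i g) (expo (enum_val c)) : nat)%:R : 'F_2) = 0)%R) ->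
  (forall c, c \in cs -> isW (expo (enum_val c))) ->
  vanish ((hit_mx n w :&: Pw_mx n w) + Pwm_mx n w)%MS cs.
Proof.
move=> h1 h2; apply: vanish_adds; last exact: vanish_Pm.
by apply: vanish_sub (capmxSl _ _) _; apply: vanish_H.
Qed.


Definition inCb (y : mon n) : bool :=
  [exists p : {set 'I_n} * 'I_n,
    [&& #|p.1| == k - 3, [exists s in p.1, s <= p.2] & y == zf p.1 p.2]].

Lemma inCbP y : reflect (inC y) (inCb y).
Proof.
apply: (iffP existsP).
  case=> [[S j]] /and3P [/eqP h1 h2 /eqP h3]; by exists S, j; split.
case=> S [j [h1 h2 h3]]; exists (S, j); by rewrite /= h1 h2 h3 !eqxx.
Qed.

Definition Cset : {set 'I_N} := [set c | inCb (expo (enum_val c))].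
Definition Ck : 'M['F_2]_(#|Cset|, N) :=
  (\matrix_(i < #|Cset|) rowOf w [:: expo (enum_val (enum_val i))])%R.

Lemma CkE i c : Ck i c = ((enum_val i == c) : nat)%:R%R.
Proof.
rewrite /Ck matrix_rowE rowOf1 (inj_eq (@expo_inj _ _)).
by rewrite (inj_eq enum_val_inj).
Qed.

Lemma rank_Ck : \rank Ck = #|Cset|.
Proof.
apply/eqP; rewrite eqn_leq rank_leq_row /=.
have E : (Ck *m Ck^T)%R = 1%:M%R.
  apply/matrixP => i i'; rewrite !mxE.
  rewrite (bigD1 (enum_val i)) //= big1 ?addr0.
    rewrite [(Ck^T)%R _ _]mxE !CkE eqxx mul1r (inj_eq enum_val_inj) eq_sym.
    by case: (i' == i).
  move=> c hc; rewrite [(Ck^T)%R _ _]mxE !CkE eq_sym (negbTE hc) mul0r //.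
have := mxrankM_maxl Ck (Ck^T)%R; rewrite E mxrank1 //.
Qed.


Lemma vanish_Ck_out c : c \notin Cset -> vanish Ck [:: c].
Proof.
move=> hc r; rewrite big_cons big_nil addr0 CkE.
case: eqP => // e; by move: hc; rewrite -e enum_valP.
Qed.

Lemma Ck_row c (hc : c \in Cset) : row (enum_rank_in hc c) Ck = rowOf w [:: expo (enum_val c)].
Proof. by rewrite /Ck rowK enum_rankK_in. Qed.

Lemma vanish_u m (A : 'M['F_2]_(m, N)) (u : 'rV['F_2]_N) cs :
  vanish A cs -> (u <= A)%MS -> (\sum_(c <- cs) u ord0 c = 0)%R.
Proof. by move=> hv uA; apply: (vanish_sub uA hv). Qed.

Local Notation X := ((hit_mx n w :&: Pw_mx n w) + Pwm_mx n w)%MS.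

Lemma capXCk (u : 'rV['F_2]_N) : (u <= X)%MS -> (u <= Ck)%MS -> u = 0%R.
Proof.
move=> uX uC; apply/rowP => c; rewrite [RHS]mxE.
case: (boolP (c \in Cset)) => hc; last first.
  by have := vanish_u (vanish_Ck_out hc) uC; rewrite big_cons big_nil addr0.
move: hc; rewrite inE => /inCbP [S [j [hS hex ez]]].
have hzW : isW (zf S j) by apply: isW_zf.
case: (boolP (j \in S)) => jS.
  have hv : vanish X [:: c].
    apply: vanish_X.
      move=> i g hi; rewrite big_cons big_nil addr0 ez coef_uniq ?Sq_uniq //.
      rewrite (negbTE (Sq_no g _ _ hi)) //; first exact: zf_le3.
      move=> v; rewrite ffunE; case: (eqVneq v j) => [->|]; first by rewrite jS.
      by case: (v \in S).
    by move=> c'; rewrite inE => /eqP ->; rewrite ez.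
  by have := vanish_u hv uX; rewrite big_cons big_nil addr0.
have [t0 [t0S t0j hmin]] := min_elt hex jS.
set m := Fv (j |: S) t0.
have hmW : isW m.
  apply: isW_Fv; first by rewrite in_setU1 t0S orbT.
  by rewrite cardsU1 jS hS; lia.
have em : expo (enum_val (idx w m)) = m by rewrite expo_idx //; exact: isW_bounded.
have hv : vanish X [:: c; idx w m].
  apply: vanish_X.
    move=> i g hi; rewrite big_cons big_cons big_nil addr0 ez em !coef_uniq ?Sq_uniq //.
    by rewrite (Sq_mate g t0S jS hi) F2_double.
  move=> c'; rewrite !inE => /orP [] /eqP ->; by rewrite ?ez ?em.
have hm : idx w m \notin Cset.
  rewrite inE em; apply/negP => /inCbP [S' [j' [_ hex' e']]].
  exact: (mate_notC t0S t0j hmin hex' e').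
have := vanish_u (vanish_Ck_out hm) uC; rewrite big_cons big_nil addr0 => h0.
by have := vanish_u hv uX; rewrite big_cons big_cons big_nil addr0 h0 addr0.
Qed.


Local Notation P := (Pw_mx n w).
Local Notation Pm := (Pwm_mx n w).
Local Notation H := (hit_mx n w).

Lemma PmP : (Pm <= P)%MS.
Proof.
apply/row_subP => r; rewrite rowK /=.
case: ifP => [/andP [h1 h2]|_]; last exact: sub0mx.
have <- : row r P = rowOf w [:: expo (enum_val r)] by rewrite rowK /= h1 h2.
exact: row_sub.
Qed.

Lemma XP : (X <= P)%MS.
Proof. by rewrite addsmx_sub capmxSr PmP. Qed.

Lemma CkP : (Ck <= P)%MS.
Proof.
apply/row_subP => i; rewrite /Ck rowK.
have := enum_valP i; rewrite inE => /inCbP [S [j [hS _ ez]]].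
rewrite ez -rowP_W; first exact: row_sub.
by apply: isW_zf.
Qed.

Lemma mdeg_sqT (T0 : {set 'I_n}) : mdeg (sqT T0) = #|T0|.
Proof.
rewrite /mdeg /sqT; under eq_bigr do rewrite ffunE.
by rewrite sum_bool_card; apply: eq_card => v; rewrite inE.
Qed.

Lemma rowOf_Sq (T0 : {set 'I_n}) :
  rowOf w (Sq 1 (sqT T0)) = (\sum_(v <- enum T0) rowOf w [:: Fv T0 v])%R.
Proof.
rewrite -rowOf_map; apply: rowOf_eq => y'.
rewrite !coef_uniq ?Sq_uniq ?SqT_mem //.
by rewrite map_inj_uniq ?enum_uniq //; exact: Fv_inj.
Qed.

Lemma SqH (T0 : {set 'I_n}) : #|T0| = k - 2 -> (rowOf w (Sq 1 (sqT T0)) <= H)%MS.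
Proof.
move=> hT.
have d1 : 1 < d.+1 by rewrite hd; lia.
have gb : forall v, sqT T0 v <= d.
  move=> v; rewrite ffunE hd; case: (v \in T0) => /=; lia.
set hi := enum_rank ((inord 1 : 'I_d.+1), code w (sqT T0)).
have <- : row hi H = rowOf w (Sq 1 (sqT T0)).
  rewrite rowK /= enum_rankK /= inordK // expo_code //.
  rewrite ifT //; apply/eqP; rewrite mdeg_sqT hT hd; lia.
exact: row_sub.
Qed.

Lemma SqP (T0 : {set 'I_n}) : #|T0| = k - 2 -> (rowOf w (Sq 1 (sqT T0)) <= P)%MS.
Proof.
move=> hT; rewrite rowOf_Sq big_seq; apply: summx_sub => v; rewrite mem_enum => vT.
rewrite -rowP_W; [exact: row_sub | exact: isW_Fv].
Qed.


Lemma omega_big (y : mon n) i : mdeg y = d -> d + 2 <= i -> omega y i = 0.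
Proof.
move=> hy hi; rewrite /omega big1 // => v _.
have : y v <= mdeg y by rewrite /mdeg (bigD1 v) //=; exact: leq_addr.
rewrite hy => hv; rewrite divn_small //.
apply: (leq_ltn_trans hv); apply: (leq_trans (ltn_expl d (ltnSn 1))).
by rewrite leq_exp2l //; lia.
Qed.

Lemma PXC : (P <= X + Ck)%MS.
Proof.
apply/row_subP => r; rewrite rowK /=.
set y := expo (enum_val r).
case: ifP => [/andP [hdeg hl]|_]; last exact: sub0mx.
case: (boolP (lexltb (d + 2) (omega y) (wfun w))) => hlt.
  have <- : row r Pm = rowOf w [:: y] by rewrite rowK /= hdeg hlt.
  apply: submx_trans (addsmxSl _ _); apply: submx_trans (addsmxSr _ _).
  exact: row_sub.
move: hl; rewrite (negbTE hlt) /= => /allP heq.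
have hy : mdeg y = d by apply/eqP.
have hw : forall i, i < d + 2 -> omega y i = wfun w i.
  by move=> i hi; apply/eqP; apply: heq; rewrite mem_iota.
have h2 : forall i, 2 <= i -> omega y i = 0.
  move=> i hi; case: (ltnP i (d + 2)) => hid; last exact: omega_big.
  by rewrite hw // wfunE; case: i hi hid => [|[|i]].
have h0 : omega y 0 = k - 3 by rewrite hw // hd; lia.
have h1 : omega y 1 = 1 by rewrite hw // hd; lia.
have [S [j [hS ey]]] := zf_struct2 h0 h1 h2.
case: (boolP [exists s in S, s <= j]) => hex.
  have hc : r \in Cset by rewrite inE; apply/inCbP; exists S, j; split.
  rewrite -(Ck_row hc); apply: submx_trans (addsmxSr _ _); exact: row_sub.
have jS : j \notin S.
  by apply/negP => jS; move/negP: hex; apply; apply/existsP; exists j; rewrite jS leqnn.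
have hjv : forall v, v \in S -> j < v.
  move=> v vS; rewrite ltnNge; apply/negP => vj; move/negP: hex; apply.
  by apply/existsP; exists v; rewrite vS vj.
set T0 := j |: S.
have hT : #|T0| = k - 2 by rewrite cardsU1 jS hS; lia.
have -> : rowOf w [:: y] =
    (rowOf w (Sq 1 (sqT T0)) + \sum_(v <- enum S) rowOf w [:: Fv T0 v])%R.
  rewrite -rowOf_map -rowOf_cat; apply: rowOf_eq => y'.
  rewrite /coef count_cat !count_uniq_mem ?Sq_uniq //; last first.
    by rewrite map_inj_uniq ?enum_uniq //; exact: Fv_inj.
  have em : enum T0 =i j :: enum S by move=> u; rewrite inE !mem_enum in_setU1.
  rewrite SqT_mem (eq_mem_map (Fv T0) em).
  rewrite map_cons in_cons ey zf_Fv //= mem_seq1.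
  case: (eqVneq y' (Fv T0 j)) => [->|ne] /=.
    by rewrite (mem_map (@Fv_inj _ T0)) mem_enum (negbTE jS).
  by case: (_ \in _).
apply: addmx_sub.
  apply: submx_trans (addsmxSl _ _); apply: submx_trans (addsmxSl _ _).
  by rewrite sub_capmx SqH // SqP.
apply: submx_trans (addsmxSr _ _).
rewrite big_seq; apply: summx_sub => v; rewrite mem_enum => vS.
have vT : v \in T0 by rewrite in_setU1 vS orbT.
have hW : isW (Fv T0 v) by apply: isW_Fv.
have e := expo_idx (isW_bounded hW).
have hc : idx w (Fv T0 v) \in Cset.
  rewrite inE e; apply/inCbP; exists (T0 :\ v), v; split.
  - have := mdeg_zf (T0 :\ v) v; rewrite -Fv_zf // (proj1 hW); lia.
  - apply/existsP; exists j; have jv := hjv v vS.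
    rewrite /T0 in_setD1 in_setU1 eqxx /= (ltnW jv) !andbT.
    by apply/eqP => e'; rewrite e' ltnn in jv.
  - exact: Fv_zf.
by rewrite -e -(Ck_row hc) row_sub.
Qed.


Lemma QP_Cset : QPdim n w = #|Cset|.
Proof.
rewrite /QPdim.
have e1 : \rank P = \rank (X + Ck)%MS.
  apply/eqP; rewrite eqn_leq !mxrankS ?PXC //.
  by rewrite addsmx_sub XP CkP.
have e2 : \rank (X :&: Ck)%MS = 0.
  apply/eqP; rewrite mxrank_eq0; apply/eqP; apply/eqP; rewrite -submx0.
  apply/row_subP => i; rewrite submx0; apply/eqP; apply: capXCk.
    exact: submx_trans (row_sub _ _) (capmxSl _ _).
  exact: submx_trans (row_sub _ _) (capmxSr _ _).
have := mxrank_sum_cap X Ck; rewrite e2 addn0 -e1 rank_Ck => ->.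
by rewrite addKn.
Qed.

Definition Pairs := [set p : {set 'I_n} * 'I_n |
  (#|p.1| == n - 2) && [exists s in p.1, s <= p.2]].

Lemma Cset_card : #|Cset| = #|Pairs|.
Proof.
have -> : Cset = [set idx w (zf p.1 p.2) | p in Pairs].
  apply/setP => c; rewrite inE; apply/idP/imsetP.
    case/inCbP => S [j [hS hex ez]]; exists (S, j).
      by rewrite inE /= hS hex andbT; apply/eqP; lia.
    rewrite /=; have -> : zf S j = expo (enum_val c) by rewrite ez.
    by rewrite idx_expo.
  case=> [[S j]]; rewrite inE /= => /andP [/eqP hS hex] ->.
  have hW : isW (zf S j) by apply: isW_zf; rewrite hS; lia.
  rewrite expo_idx; last exact: isW_bounded.
  by apply/inCbP; exists S, j; split => //; rewrite hS; lia.
apply: card_in_imset => [[S j] [S' j']]; rewrite !inE /= => /andP [/eqP hS _] /andP [/eqP hS' _] e.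
have := congr1 (fun c => expo (enum_val c)) e => /=.
rewrite !expo_idx; try (apply: isW_bounded; apply: isW_zf; rewrite ?hS ?hS'; lia).
by case/zf_inj => -> ->.
Qed.

End Spec.

Lemma twoC2 m : 2 * 'C(m, 2) = m * m.-1.
Proof.
elim: m => [//|m IH]; rewrite binS bin1 mulnDr IH /=; case: m {IH} => [//|m] /=; lia.
Qed.

Lemma arith k : 4 <= k -> (k - 1) * 'C(k - 1, 2) - (k - 1) = (k - 3) * 'C(k, 2).
Proof.
case: k => [//|k1] hk; rewrite subn1 /= binS bin1.
have := twoC2 k1; nia.
Qed.


End Part9.
Import Part9.

Theorem lemma3p8 (k : nat) (hk : 4 <= k) :
  (forall z : mon (k - 1),
     inC z <-> (admissible z /\ omega z =1 wfun [:: k - 3; 1])) /\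
  QPdim (k - 1) [:: k - 3; 1] = (k - 3) * 'C(k, 2).
Proof.
split; first exact: part1.
rewrite QP_Cset // Cset_card // count_pairs; last by lia.
exact: arith.
Qed.
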